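(* For each $j\geq 1$ and $\tau=\tau_j$, the topological zeta function is the polynomial reciprocal $$1/\zeta (\tau_j, z) = (1-z) \prod_{n=0}^{j} (1-z^{2^n}),$$ whose zeroes all lie on the unit circle $|z|=1$; moreover $\zeta(\tau_j,z)\to\zeta(\tau_\infty,z)$ as $j\to\infty$, where $1/\zeta (\tau_\infty, z) = (1-z) \prod_{n=0}^{\infty} (1-z^{2^n})$.
   Context: For a sequence $s=s_1s_2s_3\dots$ of $0$'s and $1$'s, set $\tau(s)=0.t_1t_2t_3\dots=\sum_{k\geq1}t_k2^{-k}$ with $t_k=\sum_{i=1}^k s_i \pmod 2$. Define kneading sequences $K_1=\overline{1}$, $K_2=\overline{10}$, $K_3=\overline{1011}$, and in general $K_{j+1}$ is obtained from $K_j$ by duplicating the repeating block and reversing its last symbol (equivalently applying the Feigenbaum substitution $1\to10$, $0\to11$ to the repeating block); $K_j$ has period $2^j$ and is the kneading sequence of a unimodal map with a periodic attractor of period $2^j$, and $K_\infty=\lim_j K_j$. Set $\tau_j=\tau(K_j)$ (so $\tau_1=2/3$, $\tau_2=4/5$, $\tau_3=14/17,\dots$) and $\tau_\infty=\lim_j\tau_j=\tau(K_\infty)$. For a unimodal map $f$ with parameter $\tau$, the topological (Artin–Mazur) zeta function is $\zeta(\tau,z)=\exp\sum_{n\geq1}\frac{z^n}{n}\#\mathrm{Per}_n(f)$, which depends only on $\tau$; by Milnor–Thurston, if $\tau=0.\overline{t_1\dots t_n}$ has periodic kneading sequence then $\zeta(\tau,z)=1/\big((1-z)(1+\sum_{k=1}^{n-1}\epsilon_k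 z^k)\big)$ with $\epsilon_k=1-2t_k$, and otherwise $\zeta(\tau,z)=1/\big((1-z)(1+\sum_{k\geq1}\epsilon_k z^k)\big)$. *)

(* Defs.v *)
From Stdlib Require Import Reals List Arith ClassicalEpsilon.
From Coquelicot Require Import Coquelicot Complex.
Import ListNotations.

(* Binary sequences s = s_1 s_2 s_3 ... are functions nat -> bool;
   only the values at indices k >= 1 are meaningful (index 0 is ignored). *)

Fixpoint tseq (s : nat -> bool) (k : nat) : bool :=
  match k with
  | O => false
  | S k' => xorb (tseq s k') (s k)
  end.

Definition feig_sub (b : bool) : list bool :=
  if b then [true; false] else [true; true].

(* Repeating block of K_j, of length 2^j:
   block 0 = 1, block 1 = 10, block 2 = 1011, ...
   block (j+1) = Feigenbaum substitution applied to block j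
   (= block j duplicated with its last symbol reversed). *)
Fixpoint kblock (j : nat) : list bool :=
  match j with
  | O => [true]
  | S j' => flat_map feig_sub (kblock j')
  end.

Definition Kseq (j : nat) (i : nat) : bool :=
  nth ((i - 1) mod 2 ^ j) (kblock j) false.

(* K_infinity = lim_j K_j.  Since kblock j is a prefix of kblock (j+1),
   the i-th symbol of K_j is constant for 2^j >= i; we take the value
   from K_i (2^i > i - 1). *)
Definition Kinf (i : nat) : bool := nth (i - 1) (kblock i) false.

Definition tau_digits (j : nat) : nat -> bool := tseq (Kseq j).
Definition tau_inf_digits : nat -> bool := tseq Kinf.

Definition eps (t : nat -> bool) (k : nat) : C :=
  if t k then RtoC (-1) else RtoC 1.

Definition is_period (t : nat -> bool) (n : nat) : Prop :=
  (0 < n)%nat /\ forall k, (1 <= k)%nat -> t (k + n)%nat = t k.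

Definition has_period (t : nat -> bool) : Prop := exists n, is_period t n.

Definition least_period (t : nat -> bool) : nat :=
  epsilon (inhabits 0%nat)
    (fun n => is_period t n /\ forall m, is_period t m -> (n <= m)%nat).

Definition eps_partial (t : nat -> bool) (z : C) (N : nat) : C :=
  sum_n_m (fun k => (eps t k * pow_n z k)%C) 1 N.

(* Milnor--Thurston formula for the reciprocal 1/zeta(tau, z):
   periodic case: (1-z)(1 + sum_{k=1}^{n-1} eps_k z^k);
   otherwise:     (1-z)(1 + sum_{k>=1} eps_k z^k)  (value of the series). *)
Definition zeta_recip (t : nat -> bool) (z : C) : C :=
  if excluded_middle_informative (has_period t) then
    ((1 - z) * (1 + eps_partial t z (least_period t - 1)))%C
  else
    ((1 - z) * (1 + @lim C_CompleteNormedModule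
                        (filtermap (eps_partial t z) eventually)))%C.

Definition zeta (t : nat -> bool) (z : C) : C := (/ zeta_recip t z)%C.

Fixpoint prod_pd (z : C) (j : nat) : C :=
  match j with
  | O => (1 - pow_n z 1)%C
  | S j' => (prod_pd z j' * (1 - pow_n z (2 ^ j)))%C
  end.

(* Main.v *)
Require Import Defs.
From Stdlib Require Import Reals List Arith Lia Lra ClassicalEpsilon Bool.
From Coquelicot Require Import Coquelicot Complex.
Import ListNotations.


Lemma fm_last (B0 : list bool) (x : bool) :
  flat_map feig_sub (B0 ++ [x]) = flat_map feig_sub B0 ++ [true; negb x].
Proof. rewrite flat_map_app. destruct x; reflexivity. Qed.

Lemma two_pow_pos j : (1 <= 2 ^ j)%nat.
Proof. change 1%nat with (2 ^ 0)%nat. apply Nat.pow_le_mono_r; lia. Qed.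

Lemma kblock_struct j : exists B0 x, kblock j = B0 ++ [x] /\
   kblock (S j) = B0 ++ [x] ++ B0 ++ [negb x] /\ length B0 = (2 ^ j - 1)%nat.
Proof.
  induction j as [|j [B0 [x [H1 [H2 H3]]]]].
  - exists [], true. simpl. auto.
  - exists (flat_map feig_sub B0 ++ [true]), (negb x). split; [|split].
    + change (kblock (S j)) with (flat_map feig_sub (kblock j)). rewrite H1, fm_last.
      rewrite <- app_assoc. reflexivity.
    + change (kblock (S (S j))) with (flat_map feig_sub (kblock (S j))). rewrite H2.
      replace (B0 ++ [x] ++ B0 ++ [negb x]) with ((B0 ++ [x]) ++ (B0 ++ [negb x]))
        by (rewrite <- !app_assoc; reflexivity).
      rewrite flat_map_app, !fm_last, ?negb_involutive.
      rewrite <- !app_assoc. reflexivity.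
    + assert (HL : forall l, length (flat_map feig_sub l) = (2 * length l)%nat).
      { induction l as [|b l IH]; [reflexivity|]. cbn [flat_map]. rewrite length_app, IH. destruct b; simpl; lia. }
      rewrite length_app, HL, H3. assert (1 <= 2 ^ j)%nat by (apply (two_pow_pos j)).
      simpl. lia.
Qed.

Lemma Kseq_per j i : (1 <= i)%nat -> Kseq j (i + 2 ^ j) = Kseq j i.
Proof.
  intros Hi. unfold Kseq. f_equal.
  replace (i + 2 ^ j - 1)%nat with ((i - 1) + 1 * 2 ^ j)%nat by lia.
  apply Nat.Div0.mod_add.
Qed.

Lemma Kseq_S j i : (1 <= i < 2 ^ S j)%nat -> Kseq (S j) i = Kseq j i.
Proof.
  intros Hi. destruct (kblock_struct j) as [B0 [x [H1 [H2 H3]]]].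
  pose proof (two_pow_pos j) as Hp. rewrite Nat.pow_succ_r' in Hi.
  unfold Kseq. rewrite H1, H2. rewrite Nat.pow_succ_r'.
  rewrite (Nat.mod_small (i-1)) by lia.
  replace (B0 ++ [x] ++ B0 ++ [negb x]) with ((B0 ++ [x]) ++ (B0 ++ [negb x]))
        by (rewrite <- !app_assoc; reflexivity).
  destruct (Nat.lt_ge_cases (i - 1) (2 ^ j)).
  - rewrite Nat.mod_small by lia. apply app_nth1. rewrite length_app; simpl; lia.
  - rewrite app_nth2 by (rewrite length_app; simpl; lia).
    rewrite length_app; simpl.
    replace (i - 1)%nat with ((i - 1 - 2 ^ j) + 1 * 2 ^ j)%nat at 2 by lia.
    rewrite Nat.Div0.mod_add. rewrite Nat.mod_small by lia.
    replace (length B0 + 1)%nat with (2 ^ j)%nat by lia.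
    rewrite !app_nth1 by lia. reflexivity.
Qed.

Lemma Kseq_top j : Kseq (S j) (2 ^ S j) = negb (Kseq j (2 ^ j)).
Proof.
  destruct (kblock_struct j) as [B0 [x [H1 [H2 H3]]]].
  pose proof (two_pow_pos j) as Hp.
  unfold Kseq. rewrite !Nat.pow_succ_r'. rewrite H1, H2. rewrite !Nat.mod_small by lia.
  replace (B0 ++ [x] ++ B0 ++ [negb x]) with ((B0 ++ [x] ++ B0) ++ [negb x])
        by (rewrite <- !app_assoc; reflexivity).
  rewrite app_nth2 by (rewrite !length_app; simpl; lia).
  rewrite app_nth2 by lia.
  rewrite !length_app. simpl.
  replace (2 ^ j - 1 - length B0)%nat with 0%nat by lia.
  replace (2 ^ j + (2 ^ j + 0) - 1 - (length B0 + S (length B0)))%nat with 0%nat by lia.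
  reflexivity.
Qed.

Lemma Kseq_0 i : Kseq 0 i = true.
Proof. unfold Kseq. rewrite Nat.pow_0_r, Nat.mod_1_r. reflexivity. Qed.

Lemma lt_pow2 n : (n < 2 ^ n)%nat.
Proof. induction n; simpl; lia. Qed.

Lemma Kseq_mono j d i : (1 <= i < 2 ^ S j)%nat -> Kseq (d + j) i = Kseq j i.
Proof.
  intros Hi. induction d; [reflexivity|].
  simpl. rewrite Kseq_S; [exact IHd|].
  split; [lia|]. apply Nat.lt_le_trans with (2 ^ S j)%nat; [lia|].
  apply Nat.pow_le_mono_r; lia.
Qed.

Lemma Kinf_eq j i : (1 <= i < 2 ^ S j)%nat -> Kinf i = Kseq j i.
Proof.
  intros Hi. unfold Kinf.
  assert (E : Kinf i = Kseq i i).
  { unfold Kinf, Kseq. rewrite Nat.mod_small; [reflexivity|]. pose proof (lt_pow2 i). lia. }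
  unfold Kinf in E. rewrite E.
  destruct (Nat.le_ge_cases i j).
  - replace j with ((j - i) + i)%nat by lia. symmetry. apply Kseq_mono.
    pose proof (lt_pow2 (S i)). lia.
  - replace i with ((i - j) + j)%nat at 1 by lia. apply Kseq_mono. lia.
Qed.

Lemma tseq_ext s s' k : (forall i, (1 <= i <= k)%nat -> s i = s' i) -> tseq s k = tseq s' k.
Proof.
  induction k; intros H; simpl; [reflexivity|].
  rewrite IHk by (intros; apply H; lia). rewrite H by lia. reflexivity.
Qed.

Lemma tseq_per s p k : (forall i, (1 <= i)%nat -> s (i + p)%nat = s i) ->
  tseq s (k + p) = xorb (tseq s k) (tseq s p).
Proof.
  intros H. induction k; simpl.
  - destruct (tseq s p); reflexivity.
  - rewrite IHk. replace (S (k + p)) with (S k + p)%nat by lia. rewrite H by lia.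
    rewrite xorb_assoc_reverse. rewrite (xorb_comm (tseq s p)). rewrite <- xorb_assoc_reverse. reflexivity.
Qed.

Definition ttj j := tseq (Kseq j).

Lemma tt_top j : ttj j (2 ^ j) = true.
Proof.
  destruct j as [|j].
  - reflexivity.
  - unfold ttj. pose proof (two_pow_pos j) as Hp.
    assert (HN: (2 ^ S j = S ((2 ^ j - 1) + 2 ^ j))%nat) by (rewrite Nat.pow_succ_r'; lia).
    rewrite HN at 1. cbn [tseq]. rewrite <- HN. rewrite Kseq_top.
    rewrite (tseq_ext (Kseq (S j)) (Kseq j)) by (intros; apply Kseq_S; rewrite HN; lia).
    rewrite tseq_per by (intros; apply Kseq_per; lia).
    assert (HM: (2 ^ j = S (2 ^ j - 1))%nat) by lia.
    rewrite HM at 2. cbn [tseq]. rewrite <- HM.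
    destruct (tseq (Kseq j) (2 ^ j - 1)), (Kseq j (2 ^ j)); reflexivity.
Qed.

Lemma tt_anti j k : ttj j (k + 2 ^ j) = negb (ttj j k).
Proof.
  unfold ttj. rewrite tseq_per by (intros; apply Kseq_per; lia).
  fold (ttj j). rewrite tt_top. destruct (ttj j k); reflexivity.
Qed.

Lemma tt_per j k : ttj j (k + 2 ^ S j) = ttj j k.
Proof.
  rewrite Nat.pow_succ_r'. replace (k + 2 * 2 ^ j)%nat with (k + 2 ^ j + 2 ^ j)%nat by lia.
  rewrite !tt_anti. apply negb_involutive.
Qed.

Lemma tt_S j k : (k < 2 ^ S j)%nat -> ttj (S j) k = ttj j k.
Proof. intros. apply tseq_ext. intros. apply Kseq_S. lia. Qed.

Lemma tinf_eq j k : (k < 2 ^ S j)%nat -> tau_inf_digits k = ttj j k.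
Proof. intros. apply tseq_ext. intros. apply Kinf_eq. lia. Qed.

Lemma per_mult (t : nat -> bool) m : (forall k, (1 <= k)%nat -> t (k + m)%nat = t k) ->
  forall q k, (1 <= k)%nat -> t (k + q * m)%nat = t k.
Proof.
  intros H q. induction q; intros k Hk; simpl.
  - f_equal; lia.
  - replace (k + (m + q * m))%nat with ((k + q * m) + m)%nat by lia.
    rewrite H by lia. apply IHq; lia.
Qed.

Lemma odd_decomp m : (0 < m)%nat -> exists a b, m = (2 ^ a * (2 * b + 1))%nat.
Proof.
  induction m as [m IH] using lt_wf_ind. intros Hm.
  destruct (Nat.Even_or_Odd m) as [[m' E]|[b E]].
  - destruct (IH m') as [a [b H]]; try lia. exists (S a), b. rewrite Nat.pow_succ_r'. lia.
  - exists 0%nat, b. simpl. lia.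
Qed.

Lemma tt_minimal j m : is_period (ttj j) m -> (2 ^ S j <= m)%nat.
Proof.
  intros [Hm Hper]. destruct (Nat.le_gt_cases (2 ^ S j) m) as [|Hlt]; [assumption|exfalso].
  destruct (odd_decomp m Hm) as [a [b Hab]].
  assert (Ha : (a <= j)%nat).
  { destruct (Nat.le_gt_cases a j); [assumption|].
    assert (2 ^ S j <= 2 ^ a)%nat by (apply Nat.pow_le_mono_r; lia).
    assert (1 <= 2 * b + 1)%nat by lia. nia. }
  pose proof (per_mult _ _ Hper (2 ^ (j - a)) 1%nat ltac:(lia)) as E1.
  replace (1 + 2 ^ (j - a) * m)%nat with ((1 + 2 ^ j) + b * 2 ^ S j)%nat in E1.
  2:{ rewrite Hab. rewrite Nat.mul_assoc, <- Nat.pow_add_r. replace (j - a + a)%nat with j by lia.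
      rewrite Nat.pow_succ_r'. lia. }
  rewrite (per_mult (ttj j) (2 ^ S j)) in E1 by (intros; apply tt_per || lia).
  rewrite tt_anti in E1. destruct (ttj j 1); discriminate.
Qed.

Lemma tt_is_period j : is_period (ttj j) (2 ^ S j).
Proof. split; [exact (two_pow_pos (S j))|]. intros; apply tt_per. Qed.

Lemma tt_least j : least_period (ttj j) = (2 ^ S j)%nat.
Proof.
  unfold least_period.
  destruct (epsilon_spec (inhabits 0%nat)
     (fun n => is_period (ttj j) n /\ forall m, is_period (ttj j) m -> (n <= m)%nat)) as [H1 H2].
  - exists (2 ^ S j)%nat. split; [apply tt_is_period|apply tt_minimal].
  - apply Nat.le_antisymm; [apply H2, tt_is_period| apply tt_minimal, H1].
Qed.

Definition Q (t : nat -> bool) (z : C) (n : nat) : C :=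
  sum_n_m (fun k => (eps t k * pow_n z k)%C) 0 n.

Lemma eps_negb (t t' : nat -> bool) k k' : t k = negb (t' k') -> eps t k = (- eps t' k')%C.
Proof.
  unfold eps. intros H; rewrite H. destruct (t' k'); simpl.
  - rewrite <- RtoC_opp. f_equal. ring.
  - rewrite <- RtoC_opp. reflexivity.
Qed.

Lemma sum_shift (a : nat -> C) N m :
  sum_n_m a N (N + m) = sum_n_m (fun k => a (k + N)%nat) 0 m.
Proof.
  induction m.
  - rewrite Nat.add_0_r, !sum_n_n. reflexivity.
  - rewrite Nat.add_succ_r, !sum_n_Sm by lia. rewrite IHm. f_equal. f_equal. lia.
Qed.

Lemma sumC_scal (c : C) (a : nat -> C) n m :
  sum_n_m (fun k => (c * a k)%C) n m = (c * sum_n_m a n m)%C.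
Proof. apply (sum_n_m_mult_l (K:=C_Ring)). Qed.

Lemma sumC_plus (a b : C) : plus a b = (a + b)%C.
Proof. reflexivity. Qed.

Lemma Q_tt j z : Q (ttj j) z (2 ^ S j - 1) = prod_pd z j.
Proof.
  induction j.
  - unfold Q. simpl. rewrite sum_n_Sm by lia. rewrite sum_n_n.
    unfold eps. simpl. unfold ttj. simpl.
    change (Kseq 0 1) with true. simpl.
    apply injective_projections; simpl; ring.
  - unfold Q in *.
    pose proof (two_pow_pos (S j)) as Hp.
    set (N := (2 ^ S j)%nat) in *.
    replace (2 ^ S (S j) - 1)%nat with (N + (N - 1))%nat by (unfold N; rewrite (Nat.pow_succ_r' 2 (S j)); lia).
    rewrite (sum_n_m_Chasles _ 0 (N - 1) (N + (N - 1))) by lia.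
    replace (S (N - 1)) with N by lia.
    rewrite sum_shift.
    rewrite (sum_n_m_ext_loc _ (fun k => (eps (ttj j) k * pow_n z k)%C) 0 (N - 1)).
    2:{ intros k Hk. f_equal. unfold eps. rewrite tt_S by lia. reflexivity. }
    rewrite (sum_n_m_ext_loc (fun k => (eps (ttj (S j)) (k + N) * pow_n z (k + N))%C) (fun k => (- pow_n z N * (eps (ttj j) k * pow_n z k))%C)).
    2:{ intros k Hk. rewrite (eps_negb (ttj (S j)) (ttj j) (k + N) k).
        - rewrite pow_n_plus. change (- eps (ttj j) k * (pow_n z k * pow_n z N) = - pow_n z N * (eps (ttj j) k * pow_n z k))%C. ring.
        - unfold N. rewrite tt_anti. rewrite tt_S; [reflexivity|]. lia. }
    rewrite sumC_scal, sumC_plus, IHj. change (prod_pd z (S j)) with (prod_pd z j * (1 - pow_n z N))%C. change ((prod_pd z j + - pow_n z N * prod_pd z j)%C = (prod_pd z j * (1 - pow_n z N))%C). ring.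
Qed.

Lemma C_lim_intro (f : nat -> C) (L : C) :
  (forall e, 0 < e -> exists N, forall n, (N <= n)%nat -> Cmod (f n - L) < e) ->
  filterlim f eventually (locally L).
Proof.
  intros H P [eps HP]. destruct (H eps (cond_pos eps)) as [N HN].
  exists N. intros n Hn. apply HP. apply C_NormedModule_mixin_compat1. apply HN. lia.
Qed.

Lemma C_lim_elim (f : nat -> C) (L : C) :
  filterlim f eventually (locally L) ->
  forall e, 0 < e -> exists N, forall n, (N <= n)%nat -> Cmod (f n - L) < e.
Proof.
  intros H e He.
  assert (Hs : 0 < sqrt 2) by (apply sqrt_lt_R0; lra).
  assert (Hl : locally L (fun y => Cmod (y - L) < e)).
  { exists (mkposreal (e / sqrt 2) (Rdiv_lt_0_compat _ _ He Hs)). intros y Hy.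
    pose proof (C_NormedModule_mixin_compat2 L y _ Hy) as Hc. simpl in Hc.
    replace (sqrt 2 * (e / sqrt 2)) with e in Hc by (field; lra). exact Hc. }
  destruct (H _ Hl) as [N HN]. exists N. intros n Hn. apply HN. lia.
Qed.

Lemma lim_eq (f : nat -> C) (L : C) :
  filterlim f eventually (locally L) ->
  @lim C_CompleteNormedModule (filtermap f eventually) = L.
Proof.
  intros H.
  assert (PF : ProperFilter (filtermap f eventually))
    by (apply filtermap_proper_filter, eventually_filter).
  assert (Hc : cauchy (filtermap f eventually)).
  { intros eps. exists L. apply H. exists eps. intros y Hy. exact Hy. }
  pose proof (@complete_cauchy C_CompleteNormedModule _ PF Hc) as Hb.
  refine (@filterlim_locally_unique nat C_AbsRing C_NormedModule eventually
            (Proper_StrongProper _ eventually_filter) f _ L _ H).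
  intros P [eps HP]. unfold filtermap in Hb. specialize (Hb eps).
  eapply (@filter_imp nat eventually _ (fun x => ball (@lim C_CompleteNormedModule (filtermap f eventually)) eps (f x))); [|exact Hb].
  intros y Hy. apply HP. exact Hy.
Qed.

Lemma Cmod_pow (z : C) m : Cmod (pow_n z m) = Cmod z ^ m.
Proof.
  induction m; simpl.
  - apply Cmod_1.
  - change (Cmod (z * pow_n z m)%C = Cmod z * Cmod z ^ m). rewrite Cmod_mult, IHm. reflexivity.
Qed.

Lemma pow_eq_1 x m : 0 <= x -> (0 < m)%nat -> x ^ m = 1 -> x = 1.
Proof.
  intros Hx Hm H. destruct (Rlt_le_dec x 1).
  - pose proof (pow_lt_1_compat x m (conj Hx r) Hm). lra.
  - destruct (Rle_lt_or_eq_dec 1 x r); [|auto].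
    pose proof (Rlt_pow_R1 x m r0 Hm). lra.
Qed.

Lemma Cmult_zero (a b : C) : (a * b = 0)%C -> a = 0 \/ b = 0.
Proof.
  intros H. assert (Cmod a * Cmod b = 0) by (rewrite <- Cmod_mult, H; apply Cmod_0).
  destruct (Rmult_integral _ _ H0); [left|right]; apply Cmod_eq_0; auto.
Qed.

Lemma one_minus_zero (w : C) : (1 - w = 0)%C -> w = 1.
Proof. intros H. replace w with (1 - (1 - w))%C by ring. rewrite H. ring. Qed.

Lemma prod_zero z j : prod_pd z j = 0 -> exists m, (0 < m)%nat /\ pow_n z m = RtoC 1.
Proof.
  induction j; simpl; intros H.
  - exists 1%nat. split; [lia|]. apply one_minus_zero. exact H.
  - destruct (Cmult_zero _ _ H) as [H1|H1]; [apply IHj, H1|].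
    exists (2 ^ j + (2 ^ j + 0))%nat. split; [pose proof (two_pow_pos j); lia|].
    apply one_minus_zero. exact H1.
Qed.

Lemma recip_1 (t : nat -> bool) z n : t 0%nat = false -> (1 + eps_partial t z (n - 1))%C = Q t z (n - 1).
Proof.
  intros H. unfold Q, eps_partial. rewrite (sum_Sn_m _ 0) by lia.
  assert (E : eps t 0 = RtoC 1) by (unfold eps; rewrite H; reflexivity).
  rewrite E. change (pow_n z 0) with (RtoC 1).
  change (plus ((RtoC 1) * RtoC 1)%C (sum_n_m (fun k : nat => (eps t k * pow_n z k)%C) 1 (n - 1)))
    with ((RtoC 1) * RtoC 1 + (sum_n_m (fun k : nat => (eps t k * pow_n z k)%C) 1 (n - 1)))%C.
  ring.
Qed.

Lemma zeta_recip_tt j z : zeta_recip (tau_digits j) z = ((1 - z) * prod_pd z j)%C.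
Proof.
  unfold zeta_recip. destruct excluded_middle_informative as [Hp|Hn].
  - change (tau_digits j) with (ttj j). rewrite tt_least.
    rewrite recip_1 by reflexivity. rewrite Q_tt. reflexivity.
  - exfalso. apply Hn. exists (2 ^ S j)%nat. apply tt_is_period.
Qed.

Lemma zeros_unit j z : zeta_recip (tau_digits j) z = 0%C -> Cmod z = 1%R.
Proof.
  rewrite zeta_recip_tt. intros H. destruct (Cmult_zero _ _ H) as [H1|H1].
  - apply one_minus_zero in H1. subst. apply Cmod_1.
  - destruct (prod_zero _ _ H1) as [m [Hm E]].
    apply (pow_eq_1 _ m); [apply Cmod_ge_0|exact Hm|].
    rewrite <- Cmod_pow, E. apply Cmod_1.
Qed.

Lemma tinf_anti j k : (k < 2 ^ j)%nat -> tau_inf_digits (k + 2 ^ j) = negb (tau_inf_digits k).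
Proof.
  intros H. rewrite (tinf_eq j (k + 2 ^ j)) by (rewrite Nat.pow_succ_r'; lia).
  rewrite (tinf_eq j k) by (rewrite Nat.pow_succ_r'; lia). apply tt_anti.
Qed.

Lemma tinf_not_periodic : ~ has_period tau_inf_digits.
Proof.
  intros [n [Hn Hper]].
  set (t := tau_inf_digits) in *.
  pose proof (lt_pow2 n) as Hj.
  set (P := (2 ^ n)%nat) in *.
  pose proof (Nat.div_mod P n ltac:(lia)) as Hd.
  pose proof (Nat.mod_upper_bound P n ltac:(lia)) as Hr.
  set (q := (P / n)%nat) in *. set (r := (P mod n)%nat) in *.
  assert (E1 : t (1 + r)%nat = negb (t 1%nat)).
  { rewrite <- (per_mult t n Hper q (1 + r)) by lia.
    replace (1 + r + q * n)%nat with (1 + P)%nat by lia. apply tinf_anti. lia. }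
  assert (E2 : t (1 + r + r)%nat = t 1%nat).
  { rewrite <- (per_mult t n Hper q (1 + r + r)) by lia.
    replace (1 + r + r + q * n)%nat with ((1 + r) + P)%nat by lia.
    unfold t, P. rewrite tinf_anti by lia. fold t. rewrite E1. apply negb_involutive. }
  assert (E3 : t (1 + 2 ^ S n)%nat = negb (t 1%nat)) by (apply tinf_anti; pose proof (lt_pow2 (S n)); lia).
  rewrite <- (per_mult t n Hper (2 * q) (1 + r + r)) in E2 by lia.
  replace (1 + r + r + 2 * q * n)%nat with (1 + 2 ^ S n)%nat in E2
    by (rewrite Nat.pow_succ_r'; fold P; lia).
  rewrite E2 in E3. destruct (t 1%nat); discriminate.
Qed.

Fixpoint rp (x : R) (j : nat) : R :=
  match j with
  | O => 1 - x ^ 1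
  | S j' => rp x j' * (1 - x ^ (2 ^ j))
  end.

Lemma rp_S x N : rp x (S N) = rp x N * (1 - x ^ (2 ^ S N)).
Proof. reflexivity. Qed.

Definition yy x n := x ^ (2 ^ n).

Lemma yy_S x n : yy x (S n) = yy x n * yy x n.
Proof. unfold yy. rewrite Nat.pow_succ_r', Nat.mul_comm, pow_mult. simpl. ring. Qed.

Lemma yy_bnd x n : 0 <= x < 1 -> 0 <= yy x n < 1.
Proof. intros H. unfold yy. apply pow_lt_1_compat; [exact H| apply two_pow_pos]. Qed.

Lemma yy_mono x n d : 0 <= x < 1 -> yy x (n + d) <= yy x n.
Proof.
  intros H. induction d.
  - rewrite Nat.add_0_r. lra.
  - rewrite Nat.add_succ_r, yy_S. pose proof (yy_bnd x (n + d) H). nra.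
Qed.

Lemma rp_pos x N : 0 <= x < 1 -> 0 < rp x N.
Proof.
  intros H. induction N.
  - simpl. lra.
  - rewrite rp_S. fold (yy x (S N)). pose proof (yy_bnd x (S N) H). nra.
Qed.

Lemma rp_anti x N d : 0 <= x < 1 -> rp x (N + d) <= rp x N.
Proof.
  intros H. induction d.
  - rewrite Nat.add_0_r. lra.
  - rewrite Nat.add_succ_r, rp_S. fold (yy x (S (N + d))).
    pose proof (yy_bnd x (S (N + d)) H). pose proof (rp_pos x (N + d) H). nra.
Qed.

Lemma rp_tail x M d : 0 <= x < 1 -> yy x (S M) <= / 4 ->
  rp x M * (1 - 2 * yy x (S M) + 2 * yy x (S (M + d))) <= rp x (M + d).
Proof.
  intros H H4. induction d.
  - rewrite Nat.add_0_r. lra.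
  - rewrite Nat.add_succ_r, rp_S. fold (yy x (S (M + d))).
    rewrite (yy_S x (S (M + d))).
    pose proof (yy_bnd x (S (M + d)) H). pose proof (rp_pos x M H).
    pose proof (yy_mono x (S M) d H) as Hm. replace (S M + d)%nat with (S (M + d)) in Hm by lia.
    set (Y := yy x (S (M + d))) in *. set (y1 := yy x (S M)) in *.
    assert (0 <= Y * (1 + 2 * y1 - 4 * Y)) by (apply Rmult_le_pos; lra).
    assert (rp x M * (1 - 2 * y1 + 2 * Y) * (1 - Y) <= rp x (M + d) * (1 - Y))
      by (apply Rmult_le_compat_r; lra).
    assert (rp x M * (1 - 2 * y1 + 2 * (Y * Y)) <= rp x M * (1 - 2 * y1 + 2 * Y) * (1 - Y)).
    { rewrite Rmult_assoc. apply Rmult_le_compat_l; nra. }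
    lra.
Qed.

Lemma rp_lower x : 0 <= x < 1 -> exists c, 0 < c /\ forall N, c <= rp x N.
Proof.
  intros H. destruct (pow_lt_1_zero x ltac:(rewrite Rabs_pos_eq; lra) (/ 4) ltac:(lra)) as [M HM].
  assert (Hy : yy x (S M) <= / 4).
  { unfold yy. pose proof (HM (2 ^ S M)%nat ltac:(pose proof (lt_pow2 (S M)); lia)) as E.
    rewrite Rabs_pos_eq in E by (apply pow_le; lra). lra. }
  pose proof (rp_pos x M H).
  exists (rp x M / 2). split; [lra|]. intros N.
  destruct (Nat.le_ge_cases N M).
  - pose proof (rp_anti x N (M - N) H) as HA.
    replace (N + (M - N))%nat with M in HA by lia. lra.
  - replace N with (M + (N - M))%nat by lia. pose proof (rp_tail x M (N - M) H Hy).
    pose proof (yy_bnd x (S (M + (N - M))) H). nra.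
Qed.

Lemma Cmod_1_minus (w : C) : 1 - Cmod w <= Cmod (1 - w).
Proof.
  pose proof (Cmod_triangle (1 - w) w). replace (1 - w + w)%C with (RtoC 1) in H by ring.
  rewrite Cmod_1 in H. lra.
Qed.

Lemma rp_le z N : Cmod z < 1 -> rp (Cmod z) N <= Cmod (prod_pd z N).
Proof.
  intros Hz. pose proof (Cmod_ge_0 z).
  induction N.
  - simpl. pose proof (Cmod_1_minus (pow_n z 1)). rewrite Cmod_pow in H0. exact H0.
  - rewrite rp_S. change (prod_pd z (S N)) with (prod_pd z N * (1 - pow_n z (2 ^ S N)))%C.
    rewrite Cmod_mult. pose proof (Cmod_1_minus (pow_n z (2 ^ S N))). rewrite Cmod_pow in H0.
    fold (yy (Cmod z) (S N)) in *. pose proof (yy_bnd (Cmod z) (S N) (conj H Hz)).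
    pose proof (rp_pos (Cmod z) N (conj H Hz)).
    apply Rmult_le_compat; lra.
Qed.

Lemma prod_lower z : Cmod z < 1 -> exists c, 0 < c /\ forall N, c <= Cmod (prod_pd z N).
Proof.
  intros Hz. destruct (rp_lower (Cmod z) (conj (Cmod_ge_0 z) Hz)) as [c [Hc H]].
  exists c. split; [exact Hc|]. intros N. eapply Rle_trans; [apply H|apply rp_le, Hz].
Qed.

Definition aa z k := (eps tau_inf_digits k * pow_n z k)%C.

Lemma series_conv z : Cmod z < 1 -> exists L, filterlim (fun N => Q tau_inf_digits z N) eventually (locally L).
Proof.
  intros Hz.
  assert (Hex : ex_series (K := C_AbsRing) (V := C_CompleteNormedModule) (aa z)).
  { apply (ex_series_le (K := C_AbsRing) (V := C_CompleteNormedModule) (aa z) (fun n => Cmod z ^ n)).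
    - intros n. change (norm (aa z n)) with (Cmod (aa z n)). unfold aa.
      rewrite Cmod_mult, Cmod_pow. unfold eps. destruct (tau_inf_digits n); rewrite Cmod_R; [rewrite Rabs_left by lra|rewrite Rabs_R1]; lra.
    - exists (/ (1 - Cmod z)). apply is_series_geom. rewrite Rabs_pos_eq; [exact Hz|apply Cmod_ge_0]. }
  destruct Hex as [L HL]. exists L. exact HL.
Qed.

Lemma div_lt a D e : 0 < D -> a < e * D -> a / D < e.
Proof.
  intros HD H. unfold Rdiv. apply Rmult_lt_reg_r with D; [exact HD|].
  rewrite Rmult_assoc, Rinv_l by lra. lra.
Qed.

Lemma prod_Q z N : prod_pd z N = Q tau_inf_digits z (2 ^ S N - 1).
Proof.
  rewrite <- Q_tt. unfold Q. apply sum_n_m_ext_loc. intros k Hk.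
  unfold eps. rewrite (tinf_eq N k); [reflexivity|]. pose proof (two_pow_pos (S N)). lia.
Qed.

Lemma prod_lim z L : filterlim (fun N => Q tau_inf_digits z N) eventually (locally L) ->
  filterlim (prod_pd z) eventually (locally L).
Proof.
  intros H. apply C_lim_intro. intros e He. destruct (C_lim_elim _ _ H e He) as [N HN].
  exists N. intros n Hn. rewrite prod_Q. apply HN. pose proof (lt_pow2 (S n)). lia.
Qed.

Lemma zr_inf z L : filterlim (fun N => Q tau_inf_digits z N) eventually (locally L) ->
  zeta_recip tau_inf_digits z = ((1 - z) * L)%C.
Proof.
  intros H. unfold zeta_recip. destruct excluded_middle_informative as [Hp|Hn].
  - exfalso. exact (tinf_not_periodic Hp).
  - rewrite (lim_eq _ (L - 1)%C); [ring|].
    apply C_lim_intro. intros e He. destruct (C_lim_elim _ _ H e He) as [N HN].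
    exists N. intros n Hnn.
    assert (E : eps_partial tau_inf_digits z n = (Q tau_inf_digits z n - 1)%C).
    { pose proof (recip_1 tau_inf_digits z (S n) eq_refl) as R.
      rewrite Nat.sub_succ, Nat.sub_0_r in R. rewrite <- R. ring. }
    rewrite E. replace (Q tau_inf_digits z n - 1 - (L - 1))%C with (Q tau_inf_digits z n - L)%C by ring.
    apply HN, Hnn.
Qed.

Lemma lim_lower (f : nat -> C) L c : filterlim f eventually (locally L) ->
  (forall N, c <= Cmod (f N)) -> c <= Cmod L.
Proof.
  intros H Hc. destruct (Rle_lt_dec c (Cmod L)) as [|Hlt]; [assumption|exfalso].
  destruct (C_lim_elim _ _ H (c - Cmod L) ltac:(lra)) as [N HN].
  specialize (HN N (le_n N)). specialize (Hc N).
  pose proof (Cmod_triangle (f N - L) L). replace (f N - L + L)%C with (f N) in H0 by ring. lra.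
Qed.

Theorem mainTheorem8 :
  (forall j : nat, (1 <= j)%nat ->
     (forall z : C, zeta_recip (tau_digits j) z = ((1 - z) * prod_pd z j)%C) /\
     (forall z : C, zeta_recip (tau_digits j) z = 0%C -> Cmod z = 1%R)) /\
  (forall z : C, (Cmod z < 1)%R ->
     filterlim (fun j => zeta (tau_digits j) z) eventually
               (locally (zeta tau_inf_digits z))) /\
  (forall z : C, (Cmod z < 1)%R ->
     filterlim (fun N => ((1 - z) * prod_pd z N)%C) eventually
               (locally (zeta_recip tau_inf_digits z))).
Proof.
  split; [|split].
  - intros j _. split; [apply zeta_recip_tt|apply zeros_unit].
  - intros z Hz. destruct (series_conv z Hz) as [L HL].
    pose proof (prod_lim z L HL) as HP.
    destruct (prod_lower z Hz) as [c [Hc Hlow]].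
    pose proof (lim_lower _ _ _ HP Hlow) as HLc.
    assert (Hk : 0 < Cmod (1 - z)) by (pose proof (Cmod_1_minus z); lra).
    set (k := Cmod (1 - z)) in *.
    unfold zeta. rewrite (zr_inf z L HL).
    apply C_lim_intro. intros e He.
    destruct (C_lim_elim _ _ HP (e * k * (c * c))) as [N HN].
    { apply Rmult_lt_0_compat; [apply Rmult_lt_0_compat|]; nra. }
    exists N. intros n Hn. rewrite zeta_recip_tt.
    specialize (HN n Hn). specialize (Hlow n).
    assert (HA : ((1 - z) * prod_pd z n)%C <> 0%C).
    { intros E. apply (f_equal Cmod) in E. rewrite Cmod_mult, Cmod_0 in E. fold k in E. nra. }
    assert (HB : ((1 - z) * L)%C <> 0%C).
    { intros E. apply (f_equal Cmod) in E. rewrite Cmod_mult, Cmod_0 in E. fold k in E. nra. }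
    assert (H1z : (1 - z)%C <> 0%C).
    { intros E. apply (f_equal Cmod) in E. rewrite Cmod_0 in E. fold k in E. lra. }
    assert (HL0 : (L : C) <> RtoC 0).
    { intros E. apply (f_equal Cmod) in E. rewrite Cmod_0 in E. lra. }
    assert (HP0 : prod_pd z n <> 0%C).
    { intros E. apply (f_equal Cmod) in E. rewrite Cmod_0 in E. lra. }
    replace (/ ((1 - z) * prod_pd z n) - / ((1 - z) * L))%C
      with (((1 - z) * (L - prod_pd z n)) / (((1 - z) * prod_pd z n) * ((1 - z) * L)))%C
      by (field; repeat split; assumption).
    rewrite Cmod_div by (intros E; apply Cmult_zero in E; tauto).
    rewrite !Cmod_mult. fold k.
    replace (L - prod_pd z n)%C with (- (prod_pd z n - L))%C by ring. rewrite Cmod_opp.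
    set (m := Cmod (prod_pd z n - L)) in *. set (p := Cmod (prod_pd z n)) in *. set (l := Cmod L) in *.
    apply div_lt; [apply Rmult_lt_0_compat; apply Rmult_lt_0_compat; lra|].
    assert (c * c <= p * l) by nra.
    assert (e * k * (c * c) <= e * k * (p * l)) by (apply Rmult_le_compat_l; [nra|lra]).
    assert (k * m < k * (e * k * (p * l))) by (apply Rmult_lt_compat_l; lra).
    replace (e * (k * p * (k * l))) with (k * (e * k * (p * l))) by ring. lra.
  - intros z Hz. destruct (series_conv z Hz) as [L HL].
    pose proof (prod_lim z L HL) as HP. rewrite (zr_inf z L HL).
    apply C_lim_intro. intros e He.
    assert (Hk : 0 < Cmod (1 - z) + 1) by (pose proof (Cmod_ge_0 (1 - z)); lra).
    destruct (C_lim_elim _ _ HP (e / (Cmod (1 - z) + 1))) as [N HN].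
    { apply Rdiv_lt_0_compat; lra. }
    exists N. intros n Hn. specialize (HN n Hn).
    replace ((1 - z) * prod_pd z n - (1 - z) * L)%C with ((1 - z) * (prod_pd z n - L))%C by ring.
    rewrite Cmod_mult. pose proof (Cmod_ge_0 (1 - z)). pose proof (Cmod_ge_0 (prod_pd z n - L)).
    assert (Cmod (prod_pd z n - L) * (Cmod (1 - z) + 1) < e).
    { apply Rmult_lt_reg_r with (/ (Cmod (1 - z) + 1)). apply Rinv_0_lt_compat; lra.
      rewrite Rmult_assoc, Rinv_r by lra. rewrite Rmult_1_r. exact HN. }
    nra.
Qed.
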